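(* Let $\Gamma$ be a weighted digraph with vertex set $\{1,\dots,n\}$, $n>1$, without loops and with strictly positive arc weights, with Laplacian matrix $L$ and matrices of in-forests $Q_k$. For $k\ge1$ let $\Gamma_k$ be the weighted digraph on vertex set $\{1,\dots,n\}$ that has an arc $(i,j)$, $j\neq i$, exactly when $q^k_{ij}>0$, this arc having weight $q^k_{ij}$. Then for every $k=0,1,2,\dots$, $LQ_k$ is the Laplacian matrix of $\Gamma_{k+1}$.
   Context: $W=(w_{ij})$ is the matrix of arc weights ($w_{ij}>0$ iff there is an arc $i\to j$, else $0$). The Laplacian of a weighted digraph with weights $w_{ij}$ is $L=(\ell_{ij})$ with $\ell_{ij}=-w_{ij}$ for $j\ne i$, $\ell_{ii}=\sum_{k\ne i}w_{ik}$. The weight of a subgraph is the product of its arc weights (1 if no arcs); the weight of a set of subgraphs is the sum of their weights (0 for the empty set). A converging tree is a weakly connected digraph with one vertex (the root) of outdegree 0 and all others of outdegree 1; an in-forest is a spanning subgraph of $\Gamma$ whose weak components are converging trees. $Q_k=(q^k_{ij})$ where $q^k_{ij}$ is the total weight of in-forests of $\Gamma$ with $k$ arcs in which $i$ lies in a tree rooted at $j$. *)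

(* Defs.v *)
From mathcomp Require Import all_boot all_order all_algebra.
Set Implicit Arguments. Unset Strict Implicit. Unset Printing Implicit Defensive.
Import Order.TTheory GRing.Theory Num.Theory.
Local Open Scope ring_scope.

(* Vertices are 'I_n; a weighted digraph is its weight matrix W : 'M[R]_n,
   with W i j > 0 iff there is an arc i -> j, and W i j = 0 otherwise. *)

Definition laplacian (R : ringType) (n : nat) (W : 'M[R]_n) : 'M[R]_n :=
  \matrix_(i, j) if i == j then \sum_(k | k != i) W i k else - W i j.

(* A subgraph is a set of arcs F (pairs (tail, head)). *)
Definition outdeg (n : nat) (F : {set 'I_n * 'I_n}) (v : 'I_n) : nat :=
  #|[set u | (v, u) \in F]|.

Definition wconn (n : nat) (F : {set 'I_n * 'I_n}) : rel 'I_n :=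
  connect (fun x y => ((x, y) \in F) || ((y, x) \in F)).

Definition wcomp (n : nat) (F : {set 'I_n * 'I_n}) (x : 'I_n) : {set 'I_n} :=
  [set y | wconn F x y].

(* The weak component C is a converging tree: it is weakly connected (by
   construction), exactly one vertex of C has outdegree 0 and all other
   vertices of C have outdegree 1 (all arcs leaving C's vertices stay in C). *)
Definition converging_component (n : nat) (F : {set 'I_n * 'I_n}) (C : {set 'I_n}) : bool :=
  (#|[set r in C | outdeg F r == 0%N]| == 1%N) &&
  [forall v in C, (outdeg F v == 0%N) || (outdeg F v == 1%N)].

Definition in_forest (R : numDomainType) (n : nat) (W : 'M[R]_n)
    (F : {set 'I_n * 'I_n}) : bool :=
  [forall a in F, 0 < W a.1 a.2] &&
  [forall x, converging_component F (wcomp F x)].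

Definition rooted_at (n : nat) (F : {set 'I_n * 'I_n}) (i j : 'I_n) : bool :=
  wconn F i j && (outdeg F j == 0%N).

Definition sgweight (R : ringType) (n : nat) (W : 'M[R]_n) (F : {set 'I_n * 'I_n}) : R :=
  \prod_(a in F) W a.1 a.2.

Definition Qmat (R : numDomainType) (n : nat) (W : 'M[R]_n) (k : nat) : 'M[R]_n :=
  \matrix_(i, j) \sum_(F : {set 'I_n * 'I_n} |
                       in_forest W F && (#|F| == k) && rooted_at F i j) sgweight W F.

Definition Gamma (R : numDomainType) (n : nat) (W : 'M[R]_n) (k : nat) : 'M[R]_n :=
  \matrix_(i, j) if (i != j) && (0 < Qmat W k i j) then Qmat W k i j else 0.

(* Main.v *)
Require Import Defs.
From mathcomp Require Import all_boot all_order all_algebra.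
Import Order.TTheory GRing.Theory Num.Theory.
Local Open Scope ring_scope.
Set Implicit Arguments. Unset Strict Implicit. Unset Printing Implicit Defensive.


Definition succ n (F : {set 'I_n * 'I_n}) (x : 'I_n) : 'I_n :=
  if [pick y | (x, y) \in F] is Some y then y else x.

Definition acyc n (F : {set 'I_n * 'I_n}) : bool :=
  [forall x, [exists r, fconnect (succ F) x r && (outdeg F r == 0%N)]].

Definition forestb (R : numDomainType) n (W : 'M[R]_n) (F : {set 'I_n * 'I_n}) : bool :=
  [&& [forall a in F, 0 < W a.1 a.2], [forall x, (outdeg F x <= 1)%N] & acyc F].

Definition rt n (F : {set 'I_n * 'I_n}) (x : 'I_n) : 'I_n :=
  odflt x [pick r | fconnect (succ F) x r && (outdeg F r == 0%N)].

Lemma outdeg0P n (F : {set 'I_n * 'I_n}) x :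
  reflect (forall y, (x, y) \notin F) (outdeg F x == 0%N).
Proof.
rewrite /outdeg cards_eq0; apply: (iffP eqP) => [H y|H].
  apply/negP => Hy; have : y \in [set u | (x, u) \in F] by rewrite inE.
  by rewrite H inE.
by apply/setP => y; rewrite !inE (negbTE (H y)).
Qed.

Lemma succ_arc n (F : {set 'I_n * 'I_n}) x y :
  (outdeg F x <= 1)%N -> (x, y) \in F -> succ F x = y.
Proof.
rewrite /succ => H1 Hy; case: pickP => [z Hz|/(_ y)]; last by rewrite Hy.
have /card_le1P H := H1.
have Hyin : y \in [set u | (x, u) \in F] by rewrite inE.
have := H _ Hyin z; rewrite !inE Hz => /esym /eqP; done.
Qed.

Lemma succ_root n (F : {set 'I_n * 'I_n}) x : outdeg F x == 0%N -> succ F x = x.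
Proof.
move/outdeg0P => H; rewrite /succ; case: pickP => [z Hz|//].
by have := H z; rewrite Hz.
Qed.

Lemma succ_cases n (F : {set 'I_n * 'I_n}) x : succ F x = x \/ (x, succ F x) \in F.
Proof. by rewrite /succ; case: pickP => [z Hz|_]; [right|left]. Qed.

Lemma fconnect_fix (T : finType) (f : T -> T) r y : f r = r -> fconnect f r y -> y = r.
Proof. by move=> Hr /iter_findex <-; rewrite iter_fix. Qed.

Lemma fconnect_step (T : finType) (f : T -> T) x r :
  fconnect f x r -> x != r -> fconnect f (f x) r.
Proof.
move=> H Hne; have := iter_findex H; case E: (findex f x r) => [|m].
  by move=> /= Hx; rewrite Hx eqxx in Hne.
by rewrite iterSr => <-; apply: fconnect_iter.
Qed.

Definition wrel n (F : {set 'I_n * 'I_n}) : rel 'I_n :=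
  fun x y => ((x, y) \in F) || ((y, x) \in F).

Lemma wclosure n (F : {set 'I_n * 'I_n}) r x y :
  (forall v, outdeg F v <= 1)%N -> outdeg F r == 0%N -> wconn F x y ->
  fconnect (succ F) x r = fconnect (succ F) y r.
Proof.
move=> H1 Hr Hxy.
have step : forall u v, (u, v) \in F ->
    fconnect (succ F) u r = fconnect (succ F) v r.
  move=> u v Huv; have Hs := succ_arc (H1 u) Huv.
  apply/idP/idP => Hc.
    have Hne : u != r by apply/eqP => E; move/outdeg0P: Hr => /(_ v); rewrite -E Huv.
    by have := fconnect_step Hc Hne; rewrite Hs.
  by apply: connect_trans Hc; apply: connect1; rewrite /= Hs.
have cl : closed (wrel F) [pred z | fconnect (succ F) z r].
  move=> u v /orP [Huv|Hvu]; first by rewrite !inE; exact: step.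
  by rewrite !inE (step _ _ Hvu).
have sym : connect_sym (wrel F).
  by apply: sym_connect_sym => u v; rewrite /wrel orbC.
by have := closed_connect cl Hxy; rewrite !inE.
Qed.

Lemma fconnect_wconn n (F : {set 'I_n * 'I_n}) x y :
  fconnect (succ F) x y -> wconn F x y.
Proof.
apply: connect_sub => u v /eqP <-.
case: (succ_cases F u) => [->|H]; first exact: connect0.
by apply: connect1; rewrite H.
Qed.

Lemma rt_spec n (F : {set 'I_n * 'I_n}) x :
  acyc F -> fconnect (succ F) x (rt F x) && (outdeg F (rt F x) == 0%N).
Proof.
move=> /forallP /(_ x) /existsP [r Hr]; rewrite /rt.
by case: pickP => [r' //|/(_ r)]; rewrite Hr.
Qed.

Lemma rt_uniq n (F : {set 'I_n * 'I_n}) x r :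
  (forall v, outdeg F v <= 1)%N -> acyc F ->
  fconnect (succ F) x r -> outdeg F r == 0%N -> rt F x = r.
Proof.
move=> H1 Ha Hxr Hr; have /andP [Hx' Hr'] := rt_spec x Ha.
have := wclosure H1 Hr' (fconnect_wconn Hxr); rewrite Hx' => /esym Hrr.
by apply: fconnect_fix Hrr; apply: succ_root.
Qed.

Lemma forestP (R : numDomainType) n (W : 'M[R]_n) F : in_forest W F = forestb W F.
Proof.
rewrite /in_forest /forestb; congr (_ && _).
apply/idP/idP.
  move=> /forallP H.
  have H1 : forall v, (outdeg F v <= 1)%N.
    move=> v; have /andP [_ /forallP /(_ v)] := H v.
    rewrite /wcomp inE /wconn connect0 /= => /orP [/eqP -> | /eqP ->] //.
  apply/andP; split; first by apply/forallP.
  apply/forallP => x; have /andP [/cards1P [r Hr] _] := H x.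
  have : r \in [set r in wcomp F x | outdeg F r == 0%N] by rewrite Hr inE.
  rewrite !inE => /andP [Hxr Hr0]; apply/existsP; exists r; rewrite Hr0 andbT.
  by rewrite (wclosure H1 Hr0 Hxr); apply: connect0.
move=> /andP [/forallP H1 Ha]; apply/forallP => x; apply/andP; split.
  apply/cards1P; exists (rt F x); apply/setP => y; rewrite !inE.
  have /andP [Hx Hr] := rt_spec x Ha.
  apply/idP/idP.
    move=> /andP [Hxy Hy]; apply/eqP/esym; apply: rt_uniq => //.
    by rewrite (wclosure H1 Hy Hxy); apply: connect0.
  by move=> /eqP ->; rewrite Hr andbT; apply: fconnect_wconn.
apply/forallP => v; apply/implyP => _; have := H1 v.
by case: (outdeg F v) => [|[|]].
Qed.

Lemma rootedE (R : numDomainType) n (W : 'M[R]_n) F x j :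
  forestb W F -> rooted_at F x j = (rt F x == j).
Proof.
move=> /and3P [_ /forallP H1 Ha]; rewrite /rooted_at.
have /andP [Hx Hr] := rt_spec x Ha.
apply/idP/idP.
  move=> /andP [Hxj Hj]; apply/eqP; apply: rt_uniq => //.
  by rewrite (wclosure H1 Hj Hxj); apply: connect0.
by move=> /eqP <-; rewrite Hr andbT; apply: fconnect_wconn.
Qed.

Lemma iter_agree (T : eqType) (f g : T -> T) i x m :
  (forall v, v != i -> g v = f v) ->
  iter m g x = iter m f x \/ exists l, (l <= m)%N /\ iter l g x = i /\ iter l f x = i.
Proof.
move=> Hfg; elim: m => [|m [IH|[l [Hl [H1 H2]]]]]; first by left.
  case: (eqVneq (iter m g x) i) => [E|Ne].
  - by right; exists m; split => //; rewrite -IH.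
  - by left; rewrite /= Hfg // IH.
by right; exists l; split => //; apply: leqW.
Qed.

Lemma rt_self n (F : {set 'I_n * 'I_n}) x :
  (forall v, outdeg F v <= 1)%N -> acyc F -> (rt F x == x) = (outdeg F x == 0%N).
Proof.
move=> H1 Ha; apply/idP/idP.
  by move=> /eqP E; have /andP [_] := rt_spec x Ha; rewrite E.
by move=> H; apply/eqP; apply: rt_uniq => //; apply: connect0.
Qed.

Lemma fconnect_iterP (T : finType) (f : T -> T) x y :
  reflect (exists m, iter m f x = y) (fconnect f x y).
Proof.
apply: (iffP idP) => [H|[m <-]]; last exact: fconnect_iter.
by exists (findex f x y); apply: iter_findex.
Qed.

Lemma outdeg_add n (F : {set 'I_n * 'I_n}) i p v :
  outdeg F i == 0%N -> outdeg ((i, p) |: F) v = if v == i then 1%N else outdeg F v.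
Proof.
move=> /outdeg0P Hi; rewrite /outdeg; case: eqP => [->|Ne].
  rewrite -(cards1 p); apply: eq_card => u; rewrite !inE (negbTE (Hi u)) orbF.
  by rewrite xpair_eqE eqxx.
apply: eq_card => u; rewrite !inE xpair_eqE.
by move/eqP/negbTE: Ne => ->.
Qed.

Lemma succ_add n (F : {set 'I_n * 'I_n}) i p v :
  outdeg F i == 0%N -> succ ((i, p) |: F) v = if v == i then p else succ F v.
Proof.
move=> Hi; case: eqP => [->|Ne].
  by apply: succ_arc; [rewrite outdeg_add // eqxx | rewrite setU11].
rewrite /succ (@eq_pick _ _ (fun y => (v, y) \in F)) // => u.
by rewrite !inE xpair_eqE; move/eqP/negbTE: Ne => ->.
Qed.

Lemma add_forest (R : numDomainType) n (W : 'M[R]_n) F i p :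
  forestb W F -> outdeg F i == 0%N -> rt F p != i -> 0 < W i p ->
  [/\ forestb W ((i, p) |: F),
      forall x, rt ((i, p) |: F) x = if rt F x == i then rt F p else rt F x
    & (i, p) \notin F].
Proof.
move=> /and3P [/forallP Hpos /forallP H1 Ha] Hi Hp Wip.
set G := (i, p) |: F.
have HG1 : forall v, (outdeg G v <= 1)%N.
  by move=> v; rewrite outdeg_add //; case: eqP.
have Hroot : forall r, r != i -> outdeg F r == 0%N -> outdeg G r == 0%N.
  by move=> r Hr Hr0; rewrite outdeg_add // (negbTE Hr).
have Hagree : forall v, v != i -> succ G v = succ F v.
  by move=> v Hv; rewrite succ_add // (negbTE Hv).
have case1 : forall x, rt F x != i ->
    fconnect (succ G) x (rt F x) && (outdeg G (rt F x) == 0%N).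
  move=> x Hx; have /andP [Hc Hr] := rt_spec x Ha.
  rewrite Hroot // andbT; move/fconnect_iterP: Hc => [m Hm].
  case: (iter_agree x m Hagree) => [E|[l [_ [_ El]]]].
    by apply/fconnect_iterP; exists m; rewrite E.
  have E : rt F x = i.
    apply: rt_uniq => //; first by apply/fconnect_iterP; exists l.
  by rewrite E eqxx in Hx.
have key : forall x, let r := if rt F x == i then rt F p else rt F x in
    fconnect (succ G) x r && (outdeg G r == 0%N).
  move=> x /=; case: eqP => [E|/eqP Ne]; last exact: case1.
  have /andP [C2 R2] := case1 p Hp; rewrite R2 andbT.
  have Hxi : fconnect (succ G) x i.
    have /andP [Hc _] := rt_spec x Ha; rewrite E in Hc.
    move/fconnect_iterP: Hc => [m Hm].
    case: (iter_agree x m Hagree) => [E2|[l [_ [El _]]]]; apply/fconnect_iterP.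
      by exists m; rewrite E2.
    by exists l.
  apply: connect_trans Hxi _; apply: connect_trans C2.
  by apply: connect1; rewrite /= succ_add // eqxx.
have HaG : acyc G.
  apply/forallP => x; apply/existsP; eexists; exact: key x.
split.
- apply/and3P; split => //; last by apply/forallP.
  apply/forallP => a; apply/implyP; rewrite !inE => /orP [/eqP -> //|Ha'].
  exact: (implyP (Hpos a)).
- move=> x; have /andP [K1 K2] := key x; exact: rt_uniq.
- by apply/negP => Hin; move/outdeg0P: Hi => /(_ p); rewrite Hin.
Qed.

Lemma iter_period (T : Type) (f : T -> T) i b c :
  iter b.+1 f i = i -> iter (c * b.+1) f i = i.
Proof.
move=> H; elim: c => [//|c IH]; by rewrite mulSn iterD IH.
Qed.

Lemma del_forest (R : numDomainType) n (W : 'M[R]_n) G i p :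
  forestb W G -> (i, p) \in G ->
  [/\ forestb W (G :\ (i, p)), outdeg (G :\ (i, p)) i == 0%N,
      rt (G :\ (i, p)) p != i & 0 < W i p].
Proof.
move=> /and3P [/forallP Hpos /forallP H1 Ha] Hip.
set F := G :\ (i, p).
have Hsi : succ G i = p by apply: succ_arc.
have Fi0 : outdeg F i == 0%N.
  apply/outdeg0P => u; rewrite !inE xpair_eqE eqxx /=.
  apply/negP => /andP [Hu Hiu]; have := succ_arc (H1 i) Hiu.
  by rewrite Hsi => E; rewrite E eqxx in Hu.
have Fdeg : forall v, v != i -> outdeg F v = outdeg G v.
  move=> v Hv; apply: eq_card => u; rewrite !inE xpair_eqE (negbTE Hv) /=.
  done.
have F1 : forall v, (outdeg F v <= 1)%N.
  by move=> v; case: (eqVneq v i) => [->|Hv]; [rewrite (eqP Fi0) | rewrite Fdeg].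
have Fsucc : forall v, v != i -> succ F v = succ G v.
  move=> v Hv; rewrite /succ (@eq_pick _ _ (fun y => (v, y) \in G)) // => u.
  by rewrite !inE xpair_eqE (negbTE Hv).
have Froot : forall r, outdeg G r == 0%N -> outdeg F r == 0%N.
  by move=> r Hr; case: (eqVneq r i) => [->//|Hv]; rewrite Fdeg.
have HaF : acyc F.
  apply/forallP => x; apply/existsP.
  have /andP [Hc Hr] := rt_spec x Ha; move/fconnect_iterP: Hc => [m Hm].
  case: (iter_agree x m Fsucc) => [E|[l [_ [El _]]]].
    by exists (rt G x); rewrite Froot // andbT; apply/fconnect_iterP; exists m; rewrite E.
  by exists i; rewrite Fi0 andbT; apply/fconnect_iterP; exists l.
split => //.
- apply/and3P; split => //; last by apply/forallP.
  apply/forallP => a; apply/implyP; rewrite !inE => /andP [_ Ha'].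
  exact: (implyP (Hpos a)).
- apply/negP => /eqP E.
  have /andP [Hc _] := rt_spec p HaF; rewrite E in Hc.
  move/fconnect_iterP: Hc => [m Hm].
  have [b Hb] : exists b, iter b (succ G) p = i.
    case: (iter_agree p m (fun v Hv => esym (Fsucc v Hv))) => [E2|[l [_ [El _]]]].
      by exists m; rewrite E2.
    by exists l.
  have Hper : iter b.+1 (succ G) i = i by rewrite iterSr Hsi.
  have /andP [Hc2 Hr2] := rt_spec i Ha.
  move/fconnect_iterP: Hc2 => [a Ha2].
  have Hne : rt G i != i.
    rewrite rt_self //; apply/negP => /outdeg0P /(_ p); by rewrite Hip.
  have : iter (a * b.+1) (succ G) i = rt G i.
    rewrite mulnS addnC iterD Ha2 iter_fix //; exact: succ_root.
  by rewrite iter_period // => E3; rewrite -E3 eqxx in Hne.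
- exact: (implyP (Hpos (i, p)) Hip).
Qed.

Lemma arc_succ n (G : {set 'I_n * 'I_n}) i :
  (outdeg G i <= 1)%N -> outdeg G i != 0%N -> (i, succ G i) \in G.
Proof.
move=> H1; rewrite /outdeg cards_eq0 => /set0Pn [u]; rewrite inE => Hu.
by rewrite (succ_arc H1 Hu).
Qed.

Lemma reindex_forest (R : numDomainType) n (W : 'M[R]_n) (i : 'I_n) (c : pred nat)
  (h : {set 'I_n * 'I_n} -> R) :
  \sum_(G | forestb W G && (rt G i != i) && c #|G|) h G =
  \sum_p \sum_(F | forestb W F && (rt F i == i) && (rt F p != i) && (0 < W i p)
                   && c #|F|.+1) h ((i, p) |: F).
Proof.
rewrite (partition_big (fun G => succ G i) predT) //=.
apply: eq_bigr => p _.
rewrite (reindex_onto (fun F => (i, p) |: F) (fun G => G :\ (i, p))) /=.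
  apply: eq_bigl => F; apply/idP/idP.
    move=> /andP [/andP [/andP [/andP [HG Hr] Hc] /eqP Hs] /eqP HF].
    have HG' := HG; move/and3P: HG' => [_ /forallP H1 Ha].
    have Hin : (i, p) \in (i, p) |: F by rewrite setU11.
    have [Ff F0 Fp Wp] := del_forest HG Hin.
    rewrite HF in Ff F0 Fp.
    have Hnot : (i, p) \notin F by rewrite -HF !inE eqxx.
    move: Hc; rewrite cardsU1 Hnot add1n => ->.
    rewrite Ff Fp Wp !andbT /=.
    move/and3P: Ff => [_ /forallP H1' Ha']; by rewrite rt_self.
  move=> /andP [/andP [/andP [/andP [Ff Fi] Fp] Wp] Hc].
  have Ff' := Ff; move/and3P: Ff' => [_ /forallP H1 Ha].
  have F0 : outdeg F i == 0%N by rewrite -rt_self.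
  have [HG Hrt Hnot] := add_forest Ff F0 Fp Wp.
  rewrite HG /= Hrt Fi Fp /= cardsU1 Hnot add1n Hc /= succ_add // eqxx /=.
  by rewrite eqxx setU1K // eqxx.
move=> G /andP [/andP [/andP [HG Hr] Hc] /eqP Hs].
apply: setD1K; rewrite -Hs.
move/and3P: HG => [_ /forallP H1 Ha]; apply: arc_succ => //.
by rewrite -rt_self.
Qed.

Definition ind (R : ringType) (b : bool) : R := if b then 1 else 0.

Lemma QmatE (R : numDomainType) n (W : 'M[R]_n) k m j :
  Qmat W k m j = \sum_(F | forestb W F && (#|F| == k))
                   sgweight W F * ind R (rt F m == j).
Proof.
rewrite mxE (eq_bigl (fun F => (forestb W F && (#|F| == k)) && (rt F m == j))).
  rewrite big_mkcondr /=; apply: eq_bigr => F _.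
  by rewrite /ind; case: (rt F m == j); rewrite ?mulr1 ?mulr0.
move=> F; rewrite forestP; case Hf: (forestb W F) => //=.
by rewrite (rootedE _ _ Hf).
Qed.

Lemma Qmat_ge0 (R : numDomainType) n (W : 'M[R]_n) k m j :
  (forall i j, 0 <= W i j) -> 0 <= Qmat W k m j.
Proof.
move=> H; rewrite mxE; apply: sumr_ge0 => F _; apply: prodr_ge0 => a _; exact: H.
Qed.

Lemma GammaE (R : realFieldType) n (W : 'M[R]_n) k i m :
  (forall i j, 0 <= W i j) -> i != m -> Gamma W k i m = Qmat W k i m.
Proof.
move=> H Hne; rewrite mxE Hne /=; case: ifP => // /negbT.
by rewrite -leNgt => Hle; apply/esym/eqP; rewrite eq_le Hle Qmat_ge0.
Qed.

Lemma lap_mul (R : ringType) n (W : 'M[R]_n) i (x : 'I_n -> R) :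
  W i i = 0 ->
  \sum_m laplacian W i m * x m = \sum_m W i m * (x i - x m).
Proof.
move=> Hii.
rewrite (bigD1 i) //= mxE eqxx (bigD1 i (P := predT)) //= Hii subrr mul0r add0r.
rewrite mulr_suml -big_split /=; apply: eq_bigr => m Hm.
by rewrite mxE eq_sym (negbTE Hm) mulNr mulrBr.
Qed.

Lemma swap_cond (R : ringType) (A B : finType) (P : pred A) (Q : A -> pred B)
  (h : A -> B -> R) :
  \sum_b \sum_(a | P a && Q a b) h a b = \sum_(a | P a) \sum_(b | Q a b) h a b.
Proof. by rewrite [RHS](exchange_big_dep predT). Qed.

Lemma drop_pos (R : numDomainType) n (P : pred 'I_n) (a X : 'I_n -> R) :
  (forall p, 0 <= a p) ->
  \sum_(p | P p && (0 < a p)) a p * X p = \sum_(p | P p) a p * X p.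
Proof.
move=> H; rewrite big_mkcondr /=; apply: eq_bigr => p _.
case: ifP => // /negbT Hn; have := H p; rewrite le0r (negbTE Hn) orbF => /eqP ->.
by rewrite mul0r.
Qed.

Lemma antisym (R : comRingType) n (S : pred 'I_n) (a b : 'I_n -> R) :
  \sum_(p | S p) \sum_(m | S m) a p * a m * (b p - b m) = 0.
Proof.
under eq_bigr do under eq_bigr do rewrite mulrBr.
under eq_bigr do rewrite sumrB.
rewrite sumrB; apply/eqP; rewrite subr_eq0; apply/eqP.
rewrite exchange_big /=; apply: eq_bigr => p _; apply: eq_bigr => m _.
by rewrite [a m * a p]mulrC.
Qed.

Lemma sum_ind_ne (R : ringType) n (r i : 'I_n) :
  \sum_(m | m != i) ind R (r == m) = ind R (r != i).
Proof.
case: (eqVneq r i) => [->|Hne] /=.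
  by rewrite big1 // => m Hm; rewrite /ind eq_sym (negbTE Hm).
rewrite (bigD1 r) //= /ind eqxx big1 ?addr0 // => m /andP [_ Hm].
by rewrite eq_sym (negbTE Hm).
Qed.

Lemma weight_add (R : comRingType) n (W : 'M[R]_n) (F : {set 'I_n * 'I_n}) i p :
  (i, p) \notin F -> sgweight W ((i, p) |: F) = W i p * sgweight W F.
Proof. by move=> H; rewrite /sgweight big_setU1. Qed.

Lemma LHS_form (R : realFieldType) n (W : 'M[R]_n) k i j :
  \sum_m W i m * (Qmat W k i j - Qmat W k m j) =
  \sum_(F | forestb W F && (#|F| == k))
     sgweight W F * \sum_m W i m * (ind R (rt F i == j) - ind R (rt F m == j)).
Proof.
under eq_bigr do rewrite !QmatE -sumrB mulr_sumr.
rewrite exchange_big /=; apply: eq_bigr => F _; rewrite mulr_sumr.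
by apply: eq_bigr => m _; rewrite -mulrBr mulrCA.
Qed.

Lemma RHS_form (R : realFieldType) n (W : 'M[R]_n) k i j :
  (forall i j, 0 <= W i j) ->
  laplacian (Gamma W k) i j =
  \sum_(G | forestb W G && (rt G i != i) && (#|G| == k))
     sgweight W G * (ind R (i == j) - ind R (rt G i == j)).
Proof.
move=> Hnn; rewrite mxE; case: (eqVneq i j) => [<-|Hij].
  under eq_bigr => m Hm do rewrite GammaE // 1?eq_sym // QmatE.
  rewrite exchange_big /=.
  under eq_bigr do rewrite -mulr_sumr sum_ind_ne.
  rewrite [LHS]big_mkcond [RHS]big_mkcond; apply: eq_bigr => G _.
  case: (forestb W G) => //=; case: (#|G| == k); rewrite ?andbF ?andbT //=.
  by rewrite /ind; case: (rt G i == i) => /=; rewrite ?subrr ?mulr0 ?subr0 ?mulr1.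
rewrite GammaE // QmatE -sumrN [LHS]big_mkcond [RHS]big_mkcond.
apply: eq_bigr => G _.
case: (forestb W G) => //=; case: (#|G| == k); rewrite ?andbF ?andbT //=.
rewrite /ind sub0r.
case: (eqVneq (rt G i) j) => [E|Ne].
  by rewrite E eq_sym Hij mulrN.
by rewrite oppr0 mulr0 oppr0; case: ifP.
Qed.

Lemma partA (R : realFieldType) n (W : 'M[R]_n) k i j :
  (forall i j, 0 <= W i j) ->
  \sum_(G | forestb W G && (rt G i != i) && (#|G| == k.+1))
     sgweight W G * (ind R (i == j) - ind R (rt G i == j)) =
  \sum_(F | forestb W F && (rt F i == i) && (#|F| == k))
     sgweight W F * \sum_m W i m * (ind R (rt F i == j) - ind R (rt F m == j)).
Proof.
move=> Hnn.
rewrite (reindex_forest W i (fun s => s == k.+1)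
   (fun G => sgweight W G * (ind R (i == j) - ind R (rt G i == j)))).
under eq_bigr => p _.
  rewrite (eq_bigl (fun F => (forestb W F && (rt F i == i) && (#|F| == k))
                           && ((rt F p != i) && (0 < W i p)))); last first.
    by move=> F /=; rewrite eqSS; case: (forestb W F); case: (rt F i == i);
       case: (rt F p != i); case: (0 < W i p); case: (#|F| == k).
  over.
rewrite swap_cond; apply: eq_bigr => F /andP [/andP [Ff Fi] _].
have Ff' := Ff; move/and3P: Ff' => [_ /forallP H1 Ha].
have F0 : outdeg F i == 0%N by rewrite -rt_self.
under eq_bigr => p /andP [Fp Wp].
  have [HG Hrt Hnot] := add_forest Ff F0 Fp Wp.
  rewrite weight_add // Hrt Fi -mulrA.
  over.
rewrite drop_pos // (eqP Fi) mulr_sumr [LHS]big_mkcond /=; apply: eq_bigr => m _.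
case: ifP => [_|/negbT]; first by rewrite mulrCA.
rewrite negbK => /eqP ->; by rewrite subrr !mulr0.
Qed.

Lemma partB (R : realFieldType) n (W : 'M[R]_n) k i j :
  (forall i j, 0 <= W i j) ->
  \sum_(F | forestb W F && (rt F i != i) && (#|F| == k))
     sgweight W F * \sum_m W i m * (ind R (rt F i == j) - ind R (rt F m == j)) = 0.
Proof.
move=> Hnn.
rewrite (reindex_forest W i (fun s => s == k)
   (fun G => sgweight W G * \sum_m W i m * (ind R (rt G i == j) - ind R (rt G m == j)))).
under eq_bigr => p _.
  rewrite (eq_bigl (fun F => (forestb W F && (rt F i == i) && (#|F|.+1 == k))
                           && ((rt F p != i) && (0 < W i p)))); last first.
    by move=> F /=; case: (forestb W F); case: (rt F i == i);
       case: (rt F p != i); case: (0 < W i p); case: (#|F|.+1 == k).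
  over.
rewrite swap_cond; apply: big1 => F /andP [/andP [Ff Fi] _].
have Ff' := Ff; move/and3P: Ff' => [_ /forallP H1 Ha].
have F0 : outdeg F i == 0%N by rewrite -rt_self.
under eq_bigr => p /andP [Fp Wp].
  have [HG Hrt Hnot] := add_forest Ff F0 Fp Wp.
  rewrite weight_add // Hrt Fi -mulrA.
  have -> : \sum_m W i m * (ind R (rt F p == j) -
        ind R (rt ((i, p) |: F) m == j)) =
      \sum_(m | rt F m != i) W i m * (ind R (rt F p == j) - ind R (rt F m == j)).
    rewrite [RHS]big_mkcond; apply: eq_bigr => m _; rewrite Hrt.
    by case: ifP => /= _; rewrite ?subrr ?mulr0.
  over.
rewrite drop_pos //.
under eq_bigr do rewrite mulrCA mulr_sumr.
rewrite -mulr_sumr.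
under eq_bigr do under eq_bigr do rewrite mulrA.
by rewrite (antisym _ (W i) (fun x => ind R (rt F x == j))) mulr0.
Qed.

Unset Implicit Arguments.

Theorem proposition5 (R : realFieldType) (n : nat) (W : 'M[R]_n)
  (hn : (1 < n)%N)
  (hloop : forall i, W i i = 0)
  (hnonneg : forall i j, 0 <= W i j) :
  forall k : nat, laplacian W *m Qmat W k = laplacian (Gamma W k.+1).
Proof.
move=> k; apply/matrixP => i j; rewrite RHS_form // mxE.
rewrite (@lap_mul _ _ W i (fun m => Qmat W k m j)) // LHS_form.
rewrite (bigID (fun F => rt F i == i)) /=.
rewrite [X in _ + X](eq_bigl (fun F => forestb W F && (rt F i != i) && (#|F| == k))); last first.
  by move=> F; case: (forestb W F); case: (rt F i == i); case: (#|F| == k).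
rewrite partB // addr0 partA //.
by apply: eq_bigl => F; case: (forestb W F); case: (rt F i == i); case: (#|F| == k).
Qed.
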